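(* Let $f(x,y)=\sqrt{\frac{x+y-2}{xy}}$ for real $x,y\geq 1$, and for real numbers $a>b\geq 2$ let $G(a,b)=f(a,b-1)-f(a-1,b)$. Then $G(a,b)>0$.
   Context: $f$ is only defined (in the paper) for arguments $x,y\geq 1$. *)

(* Defs.v *)
From Stdlib Require Import Reals.
Open Scope R_scope.

Definition f (x y : R) : R := sqrt ((x + y - 2) / (x * y)).

Definition G (a b : R) : R := f a (b - 1) - f (a - 1) b.

(* Main.v *)
Require Import Defs.
From Stdlib Require Import Reals Lra Psatz.
Open Scope R_scope.

Theorem lemma1p5 (a b : R) (hb : 2 <= b) (hab : b < a) : G a b > 0.
Proof.
  unfold G, f.
  assert (H1 : 0 < a * (b - 1)) by nra.
  assert (H2 : 0 < (a - 1) * b) by nra.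
  assert (Hlt : (a - 1 + b - 2) / ((a - 1) * b) < (a + (b - 1) - 2) / (a * (b - 1))).
  { apply (Rmult_lt_reg_r ((a - 1) * b * (a * (b - 1)))). nra.
    field_simplify; try lra. nra. }
  assert (H0 : 0 <= (a - 1 + b - 2) / ((a - 1) * b)).
  { unfold Rdiv; apply Rmult_le_pos; [lra | left; apply Rinv_0_lt_compat; lra]. }
  apply Rlt_gt, Rgt_minus, Rlt_gt. apply sqrt_lt_1; lra.
Qed.
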